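(* Let ${\cal G}$ be a graph as described in the context, and let $\rho_{\sup}$, $\rho_{\inf}$ be the supremum and infimum of its half-degree. Let $f\in C^0_{\rm fn}({\cal G})$ be edgewise convex (its restriction to each edge interval is convex, not necessarily strictly) and non-negative at all vertices. Then $$\int_{\cal G} f\,d{\cal E}\le \rho_{\sup}\int_{\cal G} f\,d{\cal V}.$$ Similarly, if $f\in C^0_{\rm fn}({\cal G})$ is non-negative and edgewise concave, then $\int_{\cal G} f\,d{\cal E}\ge \rho_{\inf}\int_{\cal G} f\,d{\cal V}$. If ${\cal G}$ is regular (i.e. $\rho_{\inf}=\rho_{\sup}$), the non-negativity requirements may be dropped.
   Context: A graph ${\cal G}$ consists of an undirected graph $(V,E)$ (possibly infinite; multiple edges and self-loops allowed), a length $\ell_e>0$ for each edge $e$, a specified subset $\partial{\cal G}\subseteq V$ of boundary vertices, a vertex measure ${\cal V}$ (a measure supported on $V$ with ${\cal V}(v)>0$ for every $v\in V$), and an edge measure ${\cal E}$ (a measure giving zero mass to every vertex whose restriction to the interior of each edge $e$ equals $a_e>0$ times Lebesgue measure). ${\cal G}$ is identified with its geometric realization: the metric space obtained by attaching, for each edge $e$ with endpoints $u,v$, a closed interval of length $\ell_e$ joining $u$ and $v$. $C^0({\cal G})$ is the set of continuous functions on this space; a function is of finite type if its support lies in the union of finitely many vertices and edges, and $C^0_{\rm fn}({\cal G})$ denotes the finite-type elements of $C^0({\cal G})$. The half-degree of a vertex $v$ is $\rho(v)={\cal V}(v)^{-1}\sum_{e\ni v}{\cal E}(e)/2$ (sum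 over edges having $v$ as an endpoint), and $\rho_{\sup},\rho_{\inf}$ are the supremum and infimum of $\rho$ over $V$. *)

(* Defs.v *)
From HB Require Import structures.
From mathcomp Require Import all_boot all_order all_algebra.
From mathcomp Require Import all_classical all_reals all_analysis.
Set Implicit Arguments. Unset Strict Implicit. Unset Printing Implicit Defensive.
Import Order.TTheory GRing.Theory Num.Theory.
Import numFieldNormedType.Exports.
Local Open Scope classical_set_scope.
Local Open Scope ring_scope.

(* A (metric) graph with vertex and edge measures.
   [endpt e false] is the endpoint of e at parameter 0 and [endpt e true]
   the endpoint at parameter [len e]; a self-loop has both equal.
   The vertex measure is given by its (positive) atoms [vmeas v]; the edge
   measure is given by its (positive) density [edens e] w.r.t. Lebesgue
   measure on the interior of edge e (it charges no vertex). *)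
Record mgraph (R : realType) := MGraph {
  vert : choiceType;
  edge : choiceType;
  endpt : edge -> bool -> vert;
  len : edge -> R;
  len_gt0 : forall e, 0 < len e;
  bdry : set vert;
  vmeas : vert -> R;
  vmeas_gt0 : forall v, 0 < vmeas v;
  edens : edge -> R;
  edens_gt0 : forall e, 0 < edens e }.

Arguments vert {R} G : rename.
Arguments edge {R} G : rename.
Arguments endpt {R} G _ _ : rename.
Arguments len {R} G _ : rename.
Arguments bdry {R} G _ : rename.
Arguments vmeas {R} G _ : rename.
Arguments edens {R} G _ : rename.

Section Defs.
Variables (R : realType) (G : mgraph R).

Definition emass (e : edge G) : R := edens G e * len G e.

(* Half-degree rho(v) = V(v)^-1 * sum_{e ∋ v} E(e)/2, the sum running over
   edge-ends (a self-loop at v contributes twice); extended-real valued since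
   a vertex may have infinitely many incident edges. *)
Definition half_degree (v : vert G) : \bar R :=
  ((vmeas G v)^-1)%:E *
  esum [set p : (edge G * bool)%type | endpt G p.1 p.2 = v]
       (fun p => (emass p.1 / 2)%:E).

Definition rho_sup : \bar R := ereal_sup (range half_degree).
Definition rho_inf : \bar R := ereal_inf (range half_degree).

(* A function on the geometric realization: values at the vertices and,
   on each edge e, a function on the parameter interval [0, len e]. *)
Record gfun := GFun { fv : vert G -> R; fe : edge G -> R -> R }.

Definition gcontinuous (f : gfun) : Prop :=
  (forall e, {within `[0, len G e], continuous (fe f e)}) /\
  (forall e, fe f e 0 = fv f (endpt G e false)) /\
  (forall e, fe f e (len G e) = fv f (endpt G e true)).

(* Finite type: the support lies in the union of finitely many vertices
   and (closed) edges. *)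
Definition finite_type (f : gfun) : Prop :=
  exists (A : set (vert G)) (B : set (edge G)),
    finite_set A /\ finite_set B /\
    (forall e, ~ B e -> forall x, x \in `]0, len G e[ -> fe f e x = 0) /\
    (forall v, ~ A v -> (forall e b, B e -> endpt G e b <> v) -> fv f v = 0).

Definition C0fn (f : gfun) : Prop := gcontinuous f /\ finite_type f.

Definition edgewise_convex (f : gfun) : Prop :=
  forall e, convex_function (`[0, len G e] : set (convex_lmodType R^o))
                            (fe f e : convex_lmodType R^o -> R^o).

Definition edgewise_concave (f : gfun) : Prop :=
  forall e, convex_function (`[0, len G e] : set (convex_lmodType R^o))
                            ((fun x => - fe f e x) : convex_lmodType R^o -> R^o).

Definition gnonneg (f : gfun) : Prop :=
  (forall v, 0 <= fv f v) /\
  (forall e x, x \in `[0, len G e] -> 0 <= fe f e x).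

Definition int_E (f : gfun) : R :=
  \sum_(e \in [set: edge G])
     (edens G e * Rintegral lebesgue_measure `[0, len G e] (fe f e)).

Definition int_V (f : gfun) : R :=
  \sum_(v \in [set: vert G]) (fv f v * vmeas G v).

End Defs.

(* Main.v *)
Require Import Defs.
From HB Require Import structures.
From mathcomp Require Import all_boot all_order all_algebra.
From mathcomp Require Import all_classical all_reals all_analysis.
From mathcomp Require Import ring lra.
From mathcomp Require finmap.
Import Order.TTheory GRing.Theory Num.Theory.
Import numFieldNormedType.Exports.
Local Open Scope classical_set_scope.
Local Open Scope ring_scope.

Lemma int_lin (R : realType) (l a k : R) : 0 < l ->
  Rintegral lebesgue_measure `[0, l] (fun x => a + k * x) = a * l + k * l ^+ 2 / 2.
Proof.
move=> l0.
pose p : {poly R} := a *: 'X + (k / 2) *: 'X^2.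
have hp : forall x, p.[x] = a * x + k / 2 * x ^+ 2.
  by move=> x; rewrite /p !hornerE.
have hd : forall x, (horner p)^`()%classic x = a + k * x.
  move=> x; have := congr1 (fun f => f x) (derivE p) => /= <-; rewrite /p derivD !derivZ derivX derivXn !hornerE.
  by field.
have H : (\int[lebesgue_measure]_(x in `[0%R, l]) (a + k * x)%R%:E = (horner p l)%:E - (horner p 0%R)%:E)%E.
  apply: continuous_FTC2 => //.
  - apply: continuous_subspaceT => y.
    apply: continuousD; [exact: cvg_cst|].
    apply: continuousM; [exact: cvg_cst| exact: cvg_id].
  - split.
    + by move=> ? _; exact: derivable_horner.
    + exact/cvg_at_right_filter/continuous_horner.
    + exact/cvg_at_left_filter/continuous_horner.
rewrite /Rintegral H /= !hp; by field.
Qed.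

Lemma chord_le (R : realType) (l : R) (g : R -> R) : 0 < l ->
  convex_function (`[0, l] : set (convex_lmodType R^o)) (g : convex_lmodType R^o -> R^o) ->
  forall x, x \in `[0, l] -> g x <= g 0 + (g l - g 0) / l * x.
Proof.
move=> l0 cg x; rewrite in_itv /= => /andP[x0 xl].
have t0 : 0 <= x / l by rewrite divr_ge0 // ltW.
have t1 : x / l <= 1 by rewrite ler_pdivrMr // mul1r.
have := cg (Itv01 t0 t1) l 0.
rewrite !convRE /= => H.
have E : x / l * l + (1 - x / l) * 0 = x by rewrite mulr0 addr0 mulfVK // gt_eqF.
have : g (x / l * l + (1 - x / l) * 0) <= x / l * g l + (1 - x / l) * g 0.
  apply: H; rewrite inE /= in_itv /= ?lexx ?(ltW l0) //.
rewrite E => /le_trans; apply.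
rewrite le_eqVlt; apply/orP; left; apply/eqP.
by field; rewrite gt_eqF.
Qed.

Lemma chord_int (R : realType) (l : R) (g : R -> R) : 0 < l ->
  Rintegral lebesgue_measure `[0, l] (fun x => g 0 + (g l - g 0) / l * x) = l * (g 0 + g l) / 2.
Proof. move=> l0; rewrite int_lin //; by field; rewrite gt_eqF. Qed.

Lemma integ_cont (R : realType) (l : R) (g : R -> R) :
  {within `[0, l], continuous g} ->
  (lebesgue_measure).-integrable `[0, l] (EFin \o g).
Proof. by move=> cg; apply: continuous_compact_integrable => //; exact: segment_compact. Qed.

Lemma integ_lin (R : realType) (l a k : R) :
  (lebesgue_measure).-integrable `[0, l] (EFin \o (fun x : R => a + k * x)).
Proof.
apply: integ_cont; apply: continuous_subspaceT => y.
apply: continuousD; [exact: cvg_cst|].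
apply: continuousM; [exact: cvg_cst| exact: cvg_id].
Qed.

Lemma HH_convex (R : realType) (l : R) (g : R -> R) : 0 < l ->
  {within `[0, l], continuous g} ->
  convex_function (`[0, l] : set (convex_lmodType R^o)) (g : convex_lmodType R^o -> R^o) ->
  Rintegral lebesgue_measure `[0, l] g <= l * (g 0 + g l) / 2.
Proof.
move=> l0 cg cv; rewrite -(@chord_int R l g l0).
apply: le_Rintegral => //; first exact: integ_cont.
  exact: integ_lin.
by move=> x xl; apply: chord_le => //; rewrite inE.
Qed.

Lemma HH_concave (R : realType) (l : R) (g : R -> R) : 0 < l ->
  {within `[0, l], continuous g} ->
  convex_function (`[0, l] : set (convex_lmodType R^o)) ((fun x => - g x) : convex_lmodType R^o -> R^o) ->
  l * (g 0 + g l) / 2 <= Rintegral lebesgue_measure `[0, l] g.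
Proof.
move=> l0 cg cv; rewrite -(@chord_int R l g l0).
apply: le_Rintegral => //; first exact: integ_lin.
  exact: integ_cont.
move=> x xl; have := @chord_le R l _ l0 cv x; rewrite inE => /(_ xl).
move=> H; rewrite -lerN2; apply: le_trans H _.
rewrite le_eqVlt; apply/orP; left; apply/eqP.
by field; rewrite gt_eqF.
Qed.

Lemma vanish_end (R : realType) (l : R) (g : R -> R) : 0 < l ->
  {within `[0, l], continuous g} ->
  (forall x, x \in `]0, l[ -> g x = 0) -> g 0 = 0 /\ g l = 0.
Proof.
move=> l0 cg gz.
have [_ h0 hl] := (continuous_within_itvP g l0).1 cg.
split.
- have h0' : g x @[x --> 0^'+] --> (0:R).
    apply: cvg_near_cst; near=> y.
    apply: gz; rewrite in_itv /=; apply/andP; split.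
      by near: y; exact: nbhs_right_gt.
    by near: y; exact: nbhs_right_lt.
  exact: (cvg_unique _ h0 h0').
- have hl' : g x @[x --> l^'-] --> (0:R).
    apply: cvg_near_cst; near=> y.
    apply: gz; rewrite in_itv /=; apply/andP; split.
      by near: y; exact: nbhs_left_gt.
    by near: y; exact: nbhs_left_lt.
  exact: (cvg_unique _ hl hl').
Unshelve. all: by end_near.
Qed.

Lemma regroup (R : realType) (T U : eqType) (s : seq T) (key : T -> U) (L : seq U) (F : T -> R) :
  uniq L -> (forall x, x \in s -> key x \in L) ->
  \sum_(x <- s) F x = \sum_(u <- L) \sum_(x <- s | key x == u) F x.
Proof.
move=> uL sL.
under [RHS]eq_bigr do rewrite big_mkcond.
rewrite exchange_big /=; apply: eq_big_seq => x xs.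
rewrite -big_mkcond /= -big_filter.
have -> : [seq i <- L | key x == i] = [:: key x].
  rewrite -(filter_pred1_uniq uL (sL x xs)); apply: eq_filter => u.
  by rewrite eq_sym.
by rewrite big_seq1.
Qed.

Lemma fsbigT_seq (R : realType) (T : choiceType) (r : seq T) (F : T -> R) :
  uniq r -> (forall i, i \notin r -> F i = 0) ->
  \sum_(i \in [set: T]) F i = \sum_(i <- r) F i.
Proof.
move=> ur hF; rewrite (fsbig_seq _ _ ur).
apply/esym/fsbig_widen => // x [_ /= xr]; apply: hF; apply/negP => xr'; apply: xr.
exact: xr'.
Qed.
Section Main.
Variables (R : realType) (G : mgraph R) (f : gfun G).
Hypothesis cont : forall e, {within `[0, len G e], continuous (fe f e)}.
Hypothesis c0 : forall e, fe f e 0 = fv f (endpt G e false).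
Hypothesis cl : forall e, fe f e (len G e) = fv f (endpt G e true).
Variables (A : set (vert G)) (B : set (edge G)).
Hypotheses (fA : finite_set A) (fB : finite_set B).
Hypothesis hB : forall e, ~ B e -> forall x, x \in `]0, len G e[ -> fe f e x = 0.
Hypothesis hA : forall v, ~ A v -> (forall e b, B e -> endpt G e b <> v) -> fv f v = 0.

Lemma zero_off_B e : ~ B e -> forall x, x \in `[0, len G e] -> fe f e x = 0.
Proof.
move=> nB x; have gz := hB _ nB.
have [z0 zl] := @vanish_end _ _ _ (len_gt0 e) (cont e) gz.
rewrite in_itv /= => /andP[x0 xl].
have [->|xn0] := eqVneq x 0; first exact: z0.
have [->|xnl] := eqVneq x (len G e); first exact: zl.
apply: gz; rewrite in_itv /= !lt_neqAle x0 xl eq_sym xn0 xnl //.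
Qed.

Lemma fv_endpt e b : fv f (endpt G e b) = fe f e (if b then len G e else 0).
Proof. by case: b; rewrite ?c0 ?cl. Qed.

Lemma endpt_in_B v e b : fv f v != 0 -> endpt G e b = v -> B e.
Proof.
move=> fv0 ev; case: (pselect (B e)) => // nB.
move: fv0; rewrite -ev fv_endpt zero_off_B ?eqxx //.
by case: (b); rewrite in_itv /= ?lexx ?(ltW (len_gt0 e)).
Qed.

Lemma int_off_B e : ~ B e -> Rintegral lebesgue_measure `[0, len G e] (fe f e) = 0.
Proof.
move=> nB; rewrite (@eq_Rintegral _ _ _ lebesgue_measure _ (fun=> 0)); last first.
  by move=> x /set_mem /= xI; apply: zero_off_B.
by rewrite Rintegral_cst // mul0r.
Qed.


Let sB : seq (edge G) := finmap.enum_fset (fset_set B).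
Let sA : seq (vert G) := finmap.enum_fset (fset_set A).
Let P : seq (edge G * bool) := [seq (e, b) | e <- sB, b <- [:: false; true]].
Let ep (p : edge G * bool) := endpt G p.1 p.2.
Let w (e : edge G) := emass e / 2.
Let S (v : vert G) := \sum_(p <- P | ep p == v) w p.1.
Let L := undup (sA ++ map ep P).
Let I e := Rintegral lebesgue_measure `[0, len G e] (fe f e).

Lemma inB e : (e \in sB) = `[< B e >].
Proof. by rewrite /sB in_fset_set // inE. Qed.

Lemma L1 : int_E f = \sum_(e <- sB) edens G e * I e.
Proof.
apply: fsbigT_seq; first exact: finmap.fset_uniq.
move=> e; rewrite inB => /negP nB.
by rewrite /I int_off_B ?mulr0 // => /asboolP.
Qed.


Lemma edge_bound_cvx e : edgewise_convex f ->
  edens G e * I e <= w e * fv f (endpt G e false) + w e * fv f (endpt G e true).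
Proof.
move=> cv; have := @HH_convex R (len G e) (fe f e) (len_gt0 e) (cont e) (cv e).
rewrite c0 cl -/(I e) => H.
apply: le_trans (ler_wpM2l (ltW (edens_gt0 e)) H) _.
rewrite /w /emass le_eqVlt; apply/orP; left; apply/eqP; by field.
Qed.

Lemma edge_bound_ccv e : edgewise_concave f ->
  w e * fv f (endpt G e false) + w e * fv f (endpt G e true) <= edens G e * I e.
Proof.
move=> cv; have := @HH_concave R (len G e) (fe f e) (len_gt0 e) (cont e) (cv e).
rewrite c0 cl -/(I e) => H.
apply: le_trans (ler_wpM2l (ltW (edens_gt0 e)) H).
rewrite /w /emass le_eqVlt; apply/orP; left; apply/eqP; by field.
Qed.

Lemma sumP (F : edge G -> bool -> R) :
  \sum_(e <- sB) (F e false + F e true) = \sum_(p <- P) F p.1 p.2.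
Proof. by rewrite big_allpairs; apply: eq_bigr => e _; rewrite !big_cons big_nil /= addr0. Qed.

Lemma L3 : \sum_(p <- P) w p.1 * fv f (ep p) = \sum_(v <- L) fv f v * S v.
Proof.
rewrite (@regroup R _ _ P ep L); first last.
- by move=> p pP; rewrite /L mem_undup mem_cat map_f ?orbT.
- exact: undup_uniq.
apply: eq_bigr => v _; rewrite /S mulr_sumr; apply: eq_bigr => p /eqP ->.
by rewrite mulrC.
Qed.

Lemma L4 : int_V f = \sum_(v <- L) fv f v * vmeas G v.
Proof.
apply: fsbigT_seq; first exact: undup_uniq.
move=> v; rewrite /L mem_undup mem_cat negb_or => /andP[vA vP].
rewrite hA ?mul0r //.
  move=> Av; move/negP: vA; apply; rewrite /sA in_fset_set //; exact/mem_set.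
move=> e b Be ev; move/negP: vP; apply; rewrite -ev.
apply/mapP; exists (e, b) => //.
apply/allpairsP; exists (e, b); split => //=; first by rewrite inB; apply/asboolP.
by case: b {ev}.
Qed.


Lemma uniqP : uniq P.
Proof.
apply: allpairs_uniq => //; first exact: finmap.fset_uniq.
by move=> [a b] [c d] _ _ /= ->.
Qed.

Lemma inP e b : B e -> (e, b) \in P.
Proof.
move=> Be; apply/allpairsP; exists (e, b); split => //=.
  by rewrite inB; apply/asboolP.
by case: b.
Qed.

Lemma L5 v : fv f v != 0 -> half_degree v = (S v / vmeas G v)%:E.
Proof.
move=> fv0; rewrite /half_degree.
set X := [set p : (edge G * bool)%type | endpt G p.1 p.2 = v].
have XP : X `<=` [set` P].
  by move=> [e b] /= ev; apply: inP; exact: endpt_in_B ev.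
have fX : finite_set X by apply: sub_finite_set XP (finite_seq P).
rewrite esum_fset //; last first.
  move=> p _; rewrite lee_fin divr_ge0 // /emass mulr_ge0 // ltW //.
    exact: edens_gt0.
  exact: len_gt0.
have -> : X = [set` (fun p : (edge G * bool) => ep p == v)].
  apply/seteqP; split => p /=.
    by move=> ev; rewrite unfold_in /ep /= ev eqxx.
  by rewrite unfold_in /ep /= => /eqP.
rewrite -(@bigfs _ _ _ _ P); last 2 first.
- exact: uniqP.
- move=> p /eqP pv pP; exfalso; move/negP: pP; apply.
  by case: p pv => e b /= ev; apply: inP; exact: endpt_in_B ev.
rewrite sumEFin -EFinM mulrC.
done.
Qed.


Lemma vm0 v : vmeas G v != 0.
Proof. by rewrite gt_eqF // vmeas_gt0. Qed.

Lemma cvx_real : edgewise_convex f -> int_E f <= \sum_(v <- L) fv f v * S v.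
Proof.
move=> cv; rewrite L1 -L3.
rewrite -(sumP (fun e b => w e * fv f (endpt G e b))).
by apply: ler_sum => e _; exact: edge_bound_cvx.
Qed.

Lemma ccv_real : edgewise_concave f -> \sum_(v <- L) fv f v * S v <= int_E f.
Proof.
move=> cv; rewrite L1 -L3.
rewrite -(sumP (fun e b => w e * fv f (endpt G e b))).
by apply: ler_sum => e _; exact: edge_bound_ccv.
Qed.

Lemma split_term v : fv f v != 0 ->
  ((fv f v * S v)%:E = half_degree v * (fv f v * vmeas G v)%:E)%E.
Proof.
move=> fv0; rewrite L5 // -EFinM; congr EFin.
by field; exact: vm0.
Qed.

Lemma cvx_final : edgewise_convex f -> (forall v, 0 <= fv f v) ->
  ((int_E f)%:E <= rho_sup G * (int_V f)%:E)%E.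
Proof.
move=> cv nn.
apply: (@le_trans _ _ (\sum_(v <- L) fv f v * S v)%:E); first by rewrite lee_fin cvx_real.
rewrite L4 -!sumEFin ge0_sume_distrr; last first.
  by move=> v _; rewrite lee_fin mulr_ge0 // ltW // vmeas_gt0.
apply: lee_sum => v _.
have [->|fv0] := eqVneq (fv f v) 0; first by rewrite !mul0r mule0.
rewrite split_term // muleC [X in (_ <= X)%E]muleC.
apply: lee_wpmul2l; first by rewrite lee_fin mulr_ge0 // ltW // vmeas_gt0.
by apply: ereal_sup_ubound; exists v.
Qed.

Lemma ccv_final : edgewise_concave f -> gnonneg f ->
  (rho_inf G * (int_V f)%:E <= (int_E f)%:E)%E.
Proof.
move=> cv [nn _].
apply: (@le_trans _ _ (\sum_(v <- L) fv f v * S v)%:E); last by rewrite lee_fin ccv_real.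
rewrite L4 -!sumEFin ge0_sume_distrr; last first.
  by move=> v _; rewrite lee_fin mulr_ge0 // ltW // vmeas_gt0.
apply: lee_sum => v _.
have [->|fv0] := eqVneq (fv f v) 0; first by rewrite !mul0r mule0.
rewrite split_term // muleC [X in (_ <= X)%E]muleC.
apply: lee_wpmul2l; first by rewrite lee_fin mulr_ge0 // ltW // vmeas_gt0.
by apply: ereal_inf_lbound; exists v.
Qed.

Lemma reg_eq : rho_inf G = rho_sup G ->
  (\sum_(v <- L) fv f v * S v)%:E = (rho_sup G * (int_V f)%:E)%E.
Proof.
move=> eqr.
case: (pselect (exists v, fv f v != 0)) => [[v0 h0]|none]; last first.
  have z (v : vert G) : fv f v = 0.
    by apply/eqP; apply/negPn/negP => h; apply: none; exists v.
  rewrite L4 big1; last by move=> v _; rewrite z mul0r.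
  by rewrite big1 ?mule0 // => v _; rewrite z mul0r.
have hr (v : vert G) : half_degree v = rho_sup G.
  apply/le_anti/andP; split; first by apply: ereal_sup_ubound; exists v.
  by rewrite -eqr; apply: ereal_inf_lbound; exists v.
set r := S v0 / vmeas G v0.
have rs : rho_sup G = r%:E by rewrite -(hr v0) L5.
rewrite rs L4 -EFinM mulr_sumr; congr EFin; apply: eq_bigr => v _.
have [->|fv0] := eqVneq (fv f v) 0; first by rewrite !mul0r mulr0.
have : (S v / vmeas G v)%:E = r%:E by rewrite -L5 // hr rs.
case=> hv; rewrite -hv; by field; exact: vm0.
Qed.

End Main.

Local Open Scope ereal_scope.

Theorem mainTheorem1 (R : realType) (G : mgraph R) :
  (forall f : gfun G, C0fn f -> edgewise_convex f ->
     (forall v, (0 <= fv f v)%R) ->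
     (int_E f)%:E <= rho_sup G * (int_V f)%:E) /\
  (forall f : gfun G, C0fn f -> edgewise_concave f -> gnonneg f ->
     rho_inf G * (int_V f)%:E <= (int_E f)%:E) /\
  (rho_inf G = rho_sup G ->
     (forall f : gfun G, C0fn f -> edgewise_convex f ->
        (int_E f)%:E <= rho_sup G * (int_V f)%:E) /\
     (forall f : gfun G, C0fn f -> edgewise_concave f ->
        rho_inf G * (int_V f)%:E <= (int_E f)%:E)).
Proof.
split; [|split; [|move=> eqr; split]].
- move=> f [[cont [c0 cl]] [A [B [fA [fB [hB hA]]]]]] cv nn.
  exact: (cvx_final _ _ _ cont c0 cl _ _ fA fB hB hA cv nn).
- move=> f [[cont [c0 cl]] [A [B [fA [fB [hB hA]]]]]] cv nn.
  exact: (ccv_final _ _ _ cont c0 cl _ _ fA fB hB hA cv nn).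
- move=> f [[cont [c0 cl]] [A [B [fA [fB [hB hA]]]]]] cv.
  rewrite -(reg_eq _ _ _ cont c0 cl _ _ fA fB hB hA eqr) lee_fin.
  exact: (cvx_real _ _ _ cont c0 cl _ _ fB hB cv).
- move=> f [[cont [c0 cl]] [A [B [fA [fB [hB hA]]]]]] cv.
  rewrite eqr -(reg_eq _ _ _ cont c0 cl _ _ fA fB hB hA eqr) lee_fin.
  exact: (ccv_real _ _ _ cont c0 cl _ _ fB hB cv).
Qed.
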